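(* Let $X$ be a finite-dimensional real Hilbert space and $A,B$ closed convex subsets of $X$ with $\operatorname{ri}A\cap\operatorname{ri}B\ne\varnothing$. Let $L=\operatorname{aff}(A\cup B)$ and $T=P_BR_A+\mathrm{Id}-P_A$. Then for every $\rho>0$ there exists $\kappa>0$ such that $\|x-Tx\|\ge\kappa\,d_{A\cap B}(x)$ for all $x\in L$ with $\|x\|\le\rho$.
   Context: $P_S$ is the metric projection onto a closed convex set $S$, $R_S=2P_S-\mathrm{Id}$, $d_S$ the distance function, $\operatorname{aff}$ the affine hull, $\operatorname{ri}$ the relative interior. *)

(* Defs.v *)
From mathcomp Require Import ssreflect ssrfun ssrbool eqtype ssrnat seq fintype bigop.
From Stdlib Require Import Reals List.
Open Scope R_scope.

(** The finite-dimensional real Hilbert space R^n with the standard vinner product. *)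
Definition vec (n : nat) := 'I_n -> R.

Definition vadd {n} (x y : vec n) : vec n := fun i => x i + y i.
Definition vsub {n} (x y : vec n) : vec n := fun i => x i - y i.
Definition vscale {n} (a : R) (x : vec n) : vec n := fun i => a * x i.
Definition vzero {n} : vec n := fun _ => 0.

Definition vinner {n} (x y : vec n) : R := \big[Rplus/0]_(i < n) (x i * y i).
Definition vnorm {n} (x : vec n) : R := sqrt (vinner x x).

Definition rn_closed {n} (S : vec n -> Prop) : Prop :=
  forall x, (forall eps, 0 < eps -> exists y, S y /\ vnorm (vsub x y) < eps) -> S x.

Definition rn_convex {n} (S : vec n -> Prop) : Prop :=
  forall x y t, S x -> S y -> 0 <= t <= 1 ->
    S (vadd (vscale t x) (vscale (1 - t) y)).

Definition affhull {n} (S : vec n -> Prop) (x : vec n) : Prop :=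
  exists l : list (R * vec n),
    Forall (fun p => S (snd p)) l /\
    fold_right Rplus 0 (map fst l) = 1 /\
    x = fold_right (fun p acc => vadd (vscale (fst p) (snd p)) acc) vzero l.

Definition relint {n} (S : vec n -> Prop) (x : vec n) : Prop :=
  S x /\ exists eps, 0 < eps /\
    forall y, affhull S y -> vnorm (vsub y x) < eps -> S y.

Definition is_proj {n} (S : vec n -> Prop) (x p : vec n) : Prop :=
  S p /\ forall y, S y -> vnorm (vsub x p) <= vnorm (vsub x y).

Definition is_dist {n} (S : vec n -> Prop) (x : vec n) (d : R) : Prop :=
  (forall y, S y -> d <= vnorm (vsub x y)) /\
  (forall e, (forall y, S y -> e <= vnorm (vsub x y)) -> e <= d).

Definition reflector {n} (P : vec n -> vec n) (x : vec n) : vec n :=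
  vsub (vscale 2 (P x)) x.

Definition DR_op {n} (PA PB : vec n -> vec n) (x : vec n) : vec n :=
  vsub (vadd (PB (reflector PA x)) x) (PA x).

(* Main.v *)
Require Import Defs.
From Stdlib Require Import Reals Lra FunctionalExtensionality Classical.
From mathcomp Require Import ssreflect ssrfun ssrbool eqtype ssrnat seq fintype bigop.
From mathcomp Require Import ssralg matrix mxalgebra.
From mathcomp Require Import Rstruct zify.
From Stdlib Require Import List.
Open Scope R_scope.

Module VecM.
Set Implicit Arguments.
Section V.
Variable n : nat.
Implicit Types x y z : vec n.

Ltac vext := apply functional_extensionality => j; rewrite /vadd /vsub /vscale /vzero.

Lemma vinner_sym x y : vinner x y = vinner y x.
Proof. rewrite /vinner; apply: eq_bigr => i _; ring. Qed.

Lemma vinner_addl x y z : vinner (vadd x y) z = vinner x z + vinner y z.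
Proof. rewrite /vinner -big_split; apply: eq_bigr => i _; rewrite /vadd /=; ring. Qed.

Lemma vinner_scalel c x y : vinner (vscale c x) y = c * vinner x y.
Proof. rewrite /vinner big_distrr; apply: eq_bigr => i _; rewrite /vscale /=; ring. Qed.

Lemma vinner_subl x y z : vinner (vsub x y) z = vinner x z - vinner y z.
Proof.
have -> : vsub x y = vadd x (vscale (-1) y) by vext; ring.
rewrite vinner_addl vinner_scalel; ring.
Qed.

Lemma vinner_addr x y z : vinner z (vadd x y) = vinner z x + vinner z y.
Proof. by rewrite vinner_sym vinner_addl !(vinner_sym z). Qed.
Lemma vinner_subr x y z : vinner z (vsub x y) = vinner z x - vinner z y.
Proof. by rewrite vinner_sym vinner_subl !(vinner_sym z). Qed.
Lemma vinner_scaler c x y : vinner y (vscale c x) = c * vinner y x.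
Proof. by rewrite vinner_sym vinner_scalel (vinner_sym y). Qed.

Lemma sum_ge0 (F : 'I_n -> R) : (forall i, 0 <= F i) -> 0 <= \big[Rplus/0]_(i<n) F i.
Proof. move=> H; apply: (big_ind (fun v => 0 <= v)) => //; [lra| move=> a b; lra]. Qed.

Lemma sum_le (F G : 'I_n -> R) : (forall i, F i <= G i) -> \big[Rplus/0]_(i<n) F i <= \big[Rplus/0]_(i<n) G i.
Proof. move=> H; apply: (big_ind2 (fun a b => a <= b)) => //; [lra| move=> a b c d; lra]. Qed.

Lemma vinner_ge0 x : 0 <= vinner x x.
Proof. apply: sum_ge0 => i; nra. Qed.

Lemma vnorm_ge0 x : 0 <= vnorm x.
Proof. apply: sqrt_pos. Qed.

Lemma vnorm_sq x : vnorm x * vnorm x = vinner x x.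
Proof. rewrite /vnorm sqrt_sqrt //; apply: vinner_ge0. Qed.

Lemma comp_le x j : Rabs (x j) <= vnorm x.
Proof.
rewrite /vnorm -(sqrt_Rsqr_abs (x j)); apply: sqrt_le_1_alt.
rewrite /vinner (bigD1 j) //= /Rsqr.
have : 0 <= \big[Rplus/0]_(i < n | i != j) (x i * x i).
  apply: (big_ind (fun v => 0 <= v)) => //; [lra| move=> a b; lra| move=> i _; nra].
move=> H; have := Rplus_le_compat_l (x j * x j) _ _ H; rewrite Rplus_0_r; exact.
Qed.



Lemma vnorm0 x : vnorm x = 0 -> forall j, x j = 0.
Proof. move=> H j; have := comp_le x j; have := Rabs_pos (x j); rewrite H => h1 h2.
have : Rabs (x j) = 0 by lra. case: (Req_dec (x j) 0) => // hn; have := Rabs_no_R0 _ hn; lra. Qed.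

Lemma vinner0 x y : vnorm x = 0 -> vinner x y = 0.
Proof. move=> H; rewrite /vinner big1 // => i _; rewrite (vnorm0 x H); ring. Qed.

Lemma CS x y : vinner x y <= vnorm x * vnorm y.
Proof.
have Hq : forall t, 0 <= t * t * vinner x x - 2 * t * vinner x y + vinner y y.
  move=> t; have := vinner_ge0 (vsub (vscale t x) y).
  rewrite vinner_subl !vinner_subr !vinner_scalel !vinner_scaler (vinner_sym y x); lra.
have gx := vnorm_ge0 x; have gy := vnorm_ge0 y.
case: (Req_dec (vnorm x) 0) => hx; first by rewrite vinner0 //; nra.
case: (Req_dec (vnorm y) 0) => hy; first by rewrite vinner_sym vinner0 //; nra.
have := Hq (vnorm y / vnorm x). rewrite -!vnorm_sq.
set a := vnorm x in hx gx *; set b := vnorm y in hy gy *.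
have ha : 0 < a by lra.
have hb : 0 < b by lra.
have E : b / a * (b / a) * (a * a) = b * b by field; lra.
rewrite E => H.
have : 2 * (b / a) * vinner x y <= 2 * b * b by lra.
have -> : 2 * (b / a) * vinner x y = (2 * b) * (vinner x y / a) by field; lra.
move=> H2.
have H3 : vinner x y / a <= b.
  apply: (Rmult_le_reg_l (2 * b)); lra.
have := Rmult_le_compat_r a _ _ (Rlt_le _ _ ha) H3.
have -> : vinner x y / a * a = vinner x y by field; lra.
lra.
Qed.

Lemma norm_le_sq z m : 0 <= m -> vinner z z <= m * m -> vnorm z <= m.
Proof. move=> hm h; rewrite /vnorm -(sqrt_square m) //; exact: sqrt_le_1_alt. Qed.

Lemma vnorm_scale c x : vnorm (vscale c x) = Rabs c * vnorm x.
Proof.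
rewrite /vnorm vinner_scalel vinner_scaler -Rmult_assoc sqrt_mult.
- by rewrite -/(Rsqr c) sqrt_Rsqr_abs.
- nra.
- exact: vinner_ge0.
Qed.

Lemma vnorm_tri x y : vnorm (vadd x y) <= vnorm x + vnorm y.
Proof.
apply: norm_le_sq; first by have := vnorm_ge0 x; have := vnorm_ge0 y; lra.
rewrite vinner_addl !vinner_addr -!vnorm_sq (vinner_sym y x); have := CS x y; nra.
Qed.

Lemma vnorm_subC x y : vnorm (vsub x y) = vnorm (vsub y x).
Proof.
have -> : vsub x y = vscale (-1) (vsub y x) by vext; ring.
rewrite vnorm_scale Rabs_Ropp Rabs_R1; ring.
Qed.

Lemma vnorm_tri_sub x y z : vnorm (vsub x z) <= vnorm (vsub x y) + vnorm (vsub y z).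
Proof.
have -> : vsub x z = vadd (vsub x y) (vsub y z) by vext; ring.
exact: vnorm_tri.
Qed.

Lemma sq_le_of_norm_le (a b : vec n) : vnorm a <= vnorm b -> vinner a a <= vinner b b.
Proof. move=> h; rewrite -!vnorm_sq; have := vnorm_ge0 a; nra. Qed.

Lemma sum_const (c : R) : \big[Rplus/0]_(i < n) c = INR n * c.
Proof.
rewrite big_const_ord; elim: n => [|m IH]; first by rewrite /=; ring.
rewrite S_INR Rmult_plus_distr_r -IH /=; ring.
Qed.

Lemma vnorm_le_comp x b : 0 <= b -> (forall j, Rabs (x j) <= b) -> vnorm x <= b * sqrt (INR n).
Proof.
move=> hb H; apply: norm_le_sq; first by have := sqrt_pos (INR n); nra.
have -> : b * sqrt (INR n) * (b * sqrt (INR n)) = INR n * (b * b).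
  have := sqrt_sqrt (INR n) (pos_INR n); nra.
rewrite -sum_const; apply: sum_le => i.
have := H i; have := Rabs_pos (x i) => h1 h2.
have : Rabs (x i) * Rabs (x i) <= b * b by nra.
rewrite -Rabs_mult; have := Rle_abs (x i * x i); lra.
Qed.

Lemma exp_sq (w d : vec n) t : vinner (vsub w (vscale t d)) (vsub w (vscale t d)) = vinner w w - 2*t*vinner w d + t*t*vinner d d.
Proof. rewrite vinner_subl !vinner_subr !vinner_scalel !vinner_scaler (vinner_sym d w); ring. Qed.

Lemma CS_abs x y : Rabs (vinner x y) <= vnorm x * vnorm y.
Proof.
have := CS x y; have := CS (vscale (-1) x) y.
rewrite vinner_scalel vnorm_scale Rabs_Ropp Rabs_R1 => h1 h2.
apply: Rabs_le; lra.
Qed.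

Lemma proj_vi S x p : rn_convex S -> is_proj S x p -> forall y, S y -> vinner (vsub x p) (vsub y p) <= 0.
Proof.
move=> hc [hp hmin] y hy.
set w := vsub x p; set d := vsub y p.
have key : forall t, 0 < t <= 1 -> 2 * vinner w d <= t * vinner d d.
  move=> t ht.
  have hq := hc y p t hy hp ltac:(lra).
  have := sq_le_of_norm_le _ _ (hmin _ hq).
  have -> : vsub x (vadd (vscale t y) (vscale (1 - t) p)) = vsub w (vscale t d) by rewrite /w /d; vext; ring.
  rewrite exp_sq -/w => h.
  have : t * (2 * vinner w d) <= t * (t * vinner d d) by lra.
  move=> h2; apply: (Rmult_le_reg_l t); lra.
have hD := vinner_ge0 d.
case: (Rle_lt_dec (vinner w d) 0) => // hg; exfalso.
set g := vinner w d in key hg.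
have := key (g / (g + vinner d d)).
have h1 : 0 < g / (g + vinner d d) by apply: Rdiv_lt_0_compat; lra.
have h2 : g / (g + vinner d d) <= 1.
  apply: (Rmult_le_reg_r (g + vinner d d)); first lra.
  have -> : g / (g + vinner d d) * (g + vinner d d) = g by field; lra.
  lra.
move=> /(_ (conj h1 h2)).
have -> : g / (g + vinner d d) * vinner d d = g * (vinner d d / (g + vinner d d)) by field; lra.
have : vinner d d / (g + vinner d d) <= 1.
  apply: (Rmult_le_reg_r (g + vinner d d)); first lra.
  have -> : vinner d d / (g + vinner d d) * (g + vinner d d) = vinner d d by field; lra.
  lra.
nra.
Qed.
End V.

Unset Implicit Arguments.
End VecM.
Import VecM.

Ltac vext := apply functional_extensionality => j; rewrite /vadd /vsub /vscale /vzero.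

Lemma gsum_le (I : finType) (F G : I -> R) : (forall i, F i <= G i) ->
  \big[Rplus/0]_(i : I) F i <= \big[Rplus/0]_(i : I) G i.
Proof. move=> H; apply: (big_ind2 (fun a b => a <= b)) => //; [lra| move=> a b c d; lra]. Qed.

Lemma gsum_abs (I : finType) (F : I -> R) :
  Rabs (\big[Rplus/0]_(i : I) F i) <= \big[Rplus/0]_(i : I) Rabs (F i).
Proof.
apply: (big_ind2 (fun a b => Rabs a <= b)) => //.
- rewrite Rabs_R0; lra.
- move=> a b c d h1 h2; have := Rabs_triang a c; lra.
- move=> i _; lra.
Qed.

Lemma gsum_ge0 (I : finType) (F : I -> R) : (forall i, 0 <= F i) -> 0 <= \big[Rplus/0]_(i : I) F i.
Proof. move=> H; apply: (big_ind (fun v => 0 <= v)) => //; [lra| move=> a b; lra]. Qed.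

Lemma gsum_term (I : finType) (F : I -> R) j : (forall i, 0 <= F i) -> F j <= \big[Rplus/0]_(i : I) F i.
Proof.
move=> H; rewrite (bigD1 j) //=.
have : 0 <= \big[Rplus/0]_(i : I | i != j) F i.
  apply: (big_ind (fun v => 0 <= v)) => //; [lra| move=> a b; lra].
move=> h; have := Rplus_le_compat_l (F j) _ _ h; rewrite Rplus_0_r; exact.
Qed.

Lemma gsum_sub (I : finType) (F G : I -> R) :
  \big[Rplus/0]_(i : I) F i - \big[Rplus/0]_(i : I) G i = \big[Rplus/0]_(i : I) (F i - G i).
Proof.
have -> : \big[Rplus/0]_(i : I) F i = \big[Rplus/0]_(i : I) ((F i - G i) + G i).
  by apply: eq_bigr => i _; ring.
rewrite big_split /=; ring.
Qed.

Definition rowv {n} (x : vec n) : 'rV[R]_n := \row_j x j.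

Lemma rowv_add n (x y : vec n) : rowv (vadd x y) = (rowv x + rowv y)%R.
Proof. apply/rowP => j; rewrite !mxE. reflexivity. Qed.
Lemma rowv_scale n c (x : vec n) : rowv (vscale c x) = (c *: rowv x)%R.
Proof. apply/rowP => j; rewrite !mxE. reflexivity. Qed.

Section Span.
Variable n : nat.
Variable z0 : vec n.

Definition Wc (S : vec n -> Prop) (w : vec n) : Prop :=
  exists m (c : 'I_m -> R) (s : 'I_m -> vec n), (forall i, S (s i)) /\
    w = fun j => \big[Rplus/0]_(i < m) (c i * (s i j - z0 j)).

Lemma Wc_scale S t w : Wc S w -> Wc S (vscale t w).
Proof.
move=> [m [c [s [hs ->]]]]; exists m, (fun i => t * c i), s; split => //.
vext; rewrite big_distrr; apply: eq_bigr => i _ /=; ring.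
Qed.

Lemma fold_fst (I : Type) (g : I -> R * vec n) (r : list I) :
  fold_right Rplus 0 (map fst (map g r)) = \big[Rplus/0]_(i <- r) (g i).1.
Proof. elim: r => [|i r IH] /=; first by rewrite big_nil. by rewrite big_cons IH. Qed.

Lemma fold_vec (I : Type) (g : I -> R * vec n) (r : list I) :
  fold_right (fun p acc => vadd (vscale (fst p) (snd p)) acc) vzero (map g r) =
  fun j => \big[Rplus/0]_(i <- r) ((g i).1 * (g i).2 j).
Proof.
elim: r => [|i r IH] /=; first by vext; rewrite big_nil.
rewrite IH; vext; rewrite big_cons; reflexivity.
Qed.

Lemma Wc_aff S w : S z0 -> Wc S w -> affhull S (vadd z0 w).
Proof.
move=> hz [m [c [s [hs ->]]]].
exists ((1 - \big[Rplus/0]_(i < m) c i, z0) :: map (fun i => (c i, s i)) (index_enum 'I_m)).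
split; [|split].
- constructor => //; apply/Forall_forall => p /in_map_iff [i [<- _]] /=; exact: hs.
- by rewrite /= fold_fst /= /Rminus Rplus_assoc Rplus_opp_l Rplus_0_r.
- cbn [fold_right]; rewrite fold_vec; vext.
  have -> : \big[Rplus/0]_(i < m) (c i * (s i j - z0 j)) =
     \big[Rplus/0]_(i < m) (c i * s i j) - (\big[Rplus/0]_(i < m) c i) * z0 j.
    rewrite big_distrl gsum_sub; apply: eq_bigr => i _ /=; ring.
  change (\big[Rplus/0]_(i < m) ((c i, s i).1 * (c i, s i).2 j)) with (\big[Rplus/0]_(i < m) (c i * s i j)); rewrite /=; ring.
Qed.


Lemma nat_max (P : nat -> Prop) N : forall d k0, P k0 -> (N - k0 <= d)%N -> (forall k, P k -> k <= N)%N ->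
  exists k, P k /\ forall k', P k' -> (k' <= k)%N.
Proof.
elim=> [|d IH] k0 hk0 hd hN.
  exists k0; split => // k' hk'; have := hN _ hk'; lia.
case: (classic (exists k', P k' /\ (k0 < k')%N)) => [[k' [hk' lt]]|hno].
  apply: (IH k' hk' _ hN). have := hN _ hk'. lia.
exists k0; split => // k' hk'; case: (leqP k' k0) => // lt; exfalso; apply: hno; exists k'; split => //.
Qed.

Variables A B : vec n -> Prop.
Hypothesis hzA : A z0.
Hypothesis hzB : B z0.

Definition MX m (s : 'I_m -> vec n) : 'M[R]_(m, n) := \matrix_(i, j) (s i j - z0 j).
Arguments MX {m}.
Definition good m (tag : 'I_m -> bool) (s : 'I_m -> vec n) := forall i, if tag i then A (s i) else B (s i).

Lemma max_fam : exists m tag s, good m tag s /\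
  forall m' tag' s', good m' tag' s' -> (\rank (@MX m' s') <= \rank (@MX m s))%N.
Proof.
pose P r := exists m tag s, good m tag s /\ \rank (@MX m s) = r.
have h0 : P 0%N.
  exists 0%N, (fun _ => true), (fun _ => z0); split; first by case.
  by apply/eqP; rewrite -leqn0; apply: rank_leq_row.
have hb : forall k, P k -> (k <= n)%N.
  by move=> k [m [tag [s [_ <-]]]]; apply: rank_leq_col.
have [k [[m [tag [s [hg hr]]]] hmax]] := nat_max P n (n - 0)%N 0%N h0 (leqnn _) hb.
exists m, tag, s; split => // m' tag' s' hg'; rewrite hr; apply: hmax; by exists m', tag', s'.
Qed.

Definition ext_s m (s : 'I_m -> vec n) (t : vec n) : 'I_(m + 1) -> vec n :=
  fun i => match fintype.split i with inl k => s k | inr _ => t end.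
Definition ext_tag m (tag : 'I_m -> bool) (b : bool) : 'I_(m + 1) -> bool :=
  fun i => match fintype.split i with inl k => tag k | inr _ => b end.
Arguments ext_s {m}.
Arguments ext_tag {m}.
Lemma MX_ext m (s : 'I_m -> vec n) t : MX (ext_s s t) = col_mx (MX s) (rowv (vsub t z0)).
Proof.
apply/matrixP => i j; rewrite /MX /ext_s !mxE; case: (fintype.split i) => k; rewrite !mxE //.
Qed.

Lemma in_span m tag s : good m tag s ->
  (forall m' tag' s', good m' tag' s' -> (\rank (@MX m' s') <= \rank (@MX m s))%N) ->
  forall t, A t \/ B t -> (rowv (vsub t z0) <= MX s)%MS.
Proof.
move=> hg hmax t ht.
have hg' : exists b, good _ (ext_tag tag b) (ext_s s t).
  case: ht => ht; [exists true | exists false]; move=> i; rewrite /ext_tag /ext_s;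
    case: (fintype.split i) => k //; exact: hg.
case: hg' => b hg'.
have hr := hmax _ _ _ hg'; rewrite MX_ext in hr.
have := submx_refl (col_mx (MX s) (rowv (vsub t z0))); rewrite col_mx_sub => /andP [s1 s2].
have [_ E] := mxrank_leqif_sup s1.
have : (col_mx (MX s) (rowv (vsub t z0)) <= MX s)%MS.
  by rewrite -E eqn_leq hr mxrankS.
by rewrite col_mx_sub => /andP [].
Qed.

Lemma decomp m tag s : good m tag s -> exists K, 0 < K /\ forall y, (rowv y <= @MX m s)%MS ->
  exists p q, Wc A p /\ Wc B q /\ y = vadd p q /\ vnorm p <= K * vnorm y /\ vnorm q <= K * vnorm y.
Proof.
move=> hg.
set M := @MX m s; set P := pinvmx M.
set G := \big[Rplus/0]_(j < n) \big[Rplus/0]_(i < m)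
           ((\big[Rplus/0]_(k < n) Rabs (P k i)) * Rabs (M i j)).
have hG : 0 <= G.
  apply: gsum_ge0 => j; apply: gsum_ge0 => i; apply: Rmult_le_pos; last exact: Rabs_pos.
  apply: gsum_ge0 => k; exact: Rabs_pos.
exists (G * sqrt (INR n) + 1); split; first by have := sqrt_pos (INR n); nra.
move=> y hy.
set c := fun i => \big[Rplus/0]_(k < n) (y k * P k i).
have hyc : forall j, y j = \big[Rplus/0]_(i < m) (c i * (s i j - z0 j)).
  move=> j; have E := mulmxKpV hy; have := congr1 (fun X : 'M[R]_(1,n) => X ord0 j) E; rewrite /=.
  rewrite !mxE => <-. apply: eq_bigr => i _. rewrite !mxE. apply: f_equal2 => //.
  apply: eq_bigr => k _; rewrite !mxE; reflexivity.
have hc : forall i, Rabs (c i) <= vnorm y * \big[Rplus/0]_(k < n) Rabs (P k i).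
  move=> i; apply: Rle_trans (gsum_abs _ _) _; rewrite big_distrr; apply: gsum_le => k /=.
  rewrite Rabs_mult; apply: Rmult_le_compat_r; [exact: Rabs_pos| exact: comp_le].
have bound : forall (b : bool) j, Rabs (\big[Rplus/0]_(i < m) ((if tag i == b then c i else 0) * (s i j - z0 j)))
    <= vnorm y * G.
  move=> b j; apply: Rle_trans (gsum_abs _ _) _.
  apply: (Rle_trans _ (vnorm y * \big[Rplus/0]_(i < m)
           ((\big[Rplus/0]_(k < n) Rabs (P k i)) * Rabs (M i j)))).
    rewrite big_distrr; apply: gsum_le => i /=; rewrite Rabs_mult.
    have -> : Rabs (s i j - z0 j) = Rabs (M i j) by rewrite /M /MX mxE.
    rewrite -Rmult_assoc; apply: Rmult_le_compat_r; first exact: Rabs_pos.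
    case: (tag i == b); last by rewrite Rabs_R0; apply: Rmult_le_pos; [exact: vnorm_ge0 | apply: gsum_ge0 => k; exact: Rabs_pos].
    exact: hc.
  apply: Rmult_le_compat_l; first exact: vnorm_ge0.
  rewrite /G; apply: (@gsum_term _ (fun j => \big[Rplus/0]_(i < m) ((\big[Rplus/0]_(k < n) Rabs (P k i)) * Rabs (M i j))) j) => j'.
  apply: gsum_ge0 => i; apply: Rmult_le_pos; last exact: Rabs_pos.
  apply: gsum_ge0 => k; exact: Rabs_pos.
have nb : forall b, vnorm (fun j => \big[Rplus/0]_(i < m) ((if tag i == b then c i else 0) * (s i j - z0 j)))
    <= (G * sqrt (INR n) + 1) * vnorm y.
  move=> b; apply: Rle_trans (vnorm_le_comp _ _ (bound b)) _.
  - have := vnorm_ge0 y; nra.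
  - have := vnorm_ge0 y; have := sqrt_pos (INR n); nra.
exists (fun j => \big[Rplus/0]_(i < m) ((if tag i == true then c i else 0) * (s i j - z0 j))).
exists (fun j => \big[Rplus/0]_(i < m) ((if tag i == false then c i else 0) * (s i j - z0 j))).
split; [|split; [|split; [|split]]].
- exists m, (fun i => if tag i == true then c i else 0), (fun i => if tag i == true then s i else z0); split.
    by move=> i; have := hg i; case: (tag i).
  apply: functional_extensionality => j; apply: eq_bigr => i _; case: (tag i == true) => //; ring.
- exists m, (fun i => if tag i == false then c i else 0), (fun i => if tag i == false then s i else z0); split.
    by move=> i; have := hg i; case: (tag i).
  apply: functional_extensionality => j; apply: eq_bigr => i _; case: (tag i == false) => //; ring.
- vext; rewrite hyc -big_split; apply: eq_bigr => i _ /=; case: (tag i) => /=; ring.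
- exact: nb.
- exact: nb.
Qed.
End Span.

Lemma Spn_add n m (M : 'M[R]_(m, n)) x y : (rowv x <= M)%MS -> (rowv y <= M)%MS -> (rowv (vadd x y) <= M)%MS.
Proof. by move=> h1 h2; rewrite rowv_add addmx_sub. Qed.
Lemma Spn_scale n m (M : 'M[R]_(m, n)) c x : (rowv x <= M)%MS -> (rowv (vscale c x) <= M)%MS.
Proof. by move=> h1; rewrite rowv_scale scalemx_sub. Qed.
Lemma Spn_sub n m (M : 'M[R]_(m, n)) x y : (rowv x <= M)%MS -> (rowv y <= M)%MS -> (rowv (vsub x y) <= M)%MS.
Proof.
move=> h1 h2; have -> : vsub x y = vadd x (vscale (-1) y) by vext; ring.
by apply: Spn_add => //; apply: Spn_scale.
Qed.
Lemma Spn_zero n m (M : 'M[R]_(m, n)) : (rowv (@vzero n) <= M)%MS.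
Proof. have -> : rowv (@vzero n) = 0%R by apply/rowP => j; rewrite !mxE. exact: sub0mx. Qed.

Lemma Spn_aff n m (M : 'M[R]_(m, n)) (S : vec n -> Prop) z0 :
  (forall t, S t -> (rowv (vsub t z0) <= M)%MS) ->
  forall x, affhull S x -> (rowv (vsub x z0) <= M)%MS.
Proof.
move=> hS x [l [hl [h1 ->]]].
pose F := fun (l : list (R * vec n)) (j : 'I_n) =>
  fold_right (fun p acc => vadd (vscale (fst p) (snd p)) acc) vzero l j
                 - fold_right Rplus 0 (map fst l) * z0 j.
have key : forall l, Forall (fun p => S (snd p)) l -> (rowv (F l) <= M)%MS.
  elim=> [|[c t] l' IH] hl'.
    have -> : F nil = vzero by vext; rewrite /F /vzero /=; ring.
    exact: Spn_zero.
  inversion hl' as [|? ? ht hl'']; subst.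
  have -> : F ((c, t) :: l') = vadd (vscale c (vsub t z0)) (F l') by vext; rewrite /F /vadd /vscale /=; ring.
  apply: Spn_add; [apply: Spn_scale; exact: hS| exact: IH].
have := key l hl.
have -> : F l = vsub (fold_right (fun p acc => vadd (vscale (fst p) (snd p)) acc) vzero l) z0.
  by apply: functional_extensionality => j; rewrite /F h1 /vsub; ring.
done.
Qed.

Theorem lemma4p3 (n : nat) (A B : vec n -> Prop) (PA PB : vec n -> vec n)
  (hAc : rn_closed A) (hAv : rn_convex A)
  (hBc : rn_closed B) (hBv : rn_convex B)
  (hri : exists z, relint A z /\ relint B z)
  (hPA : forall x, is_proj A x (PA x))
  (hPB : forall x, is_proj B x (PB x)) :
  forall rho, 0 < rho ->
    exists kappa, 0 < kappa /\
      forall x, affhull (fun y => A y \/ B y) x -> vnorm x <= rho ->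
        forall d, is_dist (fun y => A y /\ B y) x d ->
          kappa * d <= vnorm (vsub x (DR_op PA PB x)).
Proof.
move=> rho hrho.
case: hri => z0 [[hzA [eA [heA hA]]] [hzB [eB [heB hB]]]].
set eps := Rmin eA eB / 2.
have heps : 0 < eps by rewrite /eps; have := Rmin_glb_lt _ _ _ heA heB; lra.
have heA' : eps < eA by rewrite /eps; have := Rmin_l eA eB; lra.
have heB' : eps < eB by rewrite /eps; have := Rmin_r eA eB; lra.
have Ez : forall w, vsub (vadd z0 w) z0 = w by move=> w; vext; ring.
have ballA : forall w, Wc n z0 A w -> vnorm w <= eps -> A (vadd z0 w).
  move=> w hw hn; apply: hA; [exact: Wc_aff | rewrite Ez; lra].
have ballB : forall w, Wc n z0 B w -> vnorm w <= eps -> B (vadd z0 w).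
  move=> w hw hn; apply: hB; [exact: Wc_aff | rewrite Ez; lra].
have [m [tag [s [hg hmax]]]] := @max_fam n z0 A B hzA.
have [K [hK hdec]] := @decomp n z0 A B hzA hzB m tag s hg.
set M := MX n z0 m s in hdec hmax.
have spA : forall t, A t -> (rowv (vsub t z0) <= M)%MS.
  by move=> t ht; apply: (@in_span n z0 A B m tag s hg hmax); left.
have spB : forall t, B t -> (rowv (vsub t z0) <= M)%MS.
  by move=> t ht; apply: (@in_span n z0 A B m tag s hg hmax); right.
have spL : forall x, affhull (fun y => A y \/ B y) x -> (rowv (vsub x z0) <= M)%MS.
  apply: Spn_aff => t [ht|ht]; [exact: spA | exact: spB].
set R0 := rho + vnorm z0.
have hR0 : 0 < R0 by have := vnorm_ge0 z0; rewrite /R0; lra.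
set C1 := K / eps * (7 * R0 + eps).
have hC1 : 0 <= C1 by rewrite /C1; apply: Rmult_le_pos; [apply: Rlt_le; apply: Rdiv_lt_0_compat| ]; lra.
set Ctot := C1 + 2 * R0 * K / eps + K + 1.
have hKe : 0 <= 2 * R0 * K / eps by apply: Rlt_le; apply: Rdiv_lt_0_compat; nra.
have hCt : 0 < Ctot by rewrite /Ctot; lra.
exists (1 / Ctot); split; first by apply: Rdiv_lt_0_compat; lra.
move=> x hx hxn d hd.
set a := PA x; set r := reflector PA x; set b := PB r.
have Edr : vsub x (DR_op PA PB x) = vsub a b.
  by vext; rewrite /DR_op /a /b /r /vsub /vadd; ring.
rewrite Edr.
set dl := vnorm (vsub a b).
have hdl : 0 <= dl by exact: vnorm_ge0.
suff [c [hcA [hcB hc]]] : exists c, A c /\ B c /\ vnorm (vsub x c) <= Ctot * dl.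
  have := proj1 hd c (conj hcA hcB) => hdc.
  apply: (Rmult_le_reg_l Ctot) => //.
  have -> : Ctot * (1 / Ctot * d) = d by field; lra.
  lra.
have [hPa hPam] := hPA x.
have [hPb hPbm] := hPB r.
have viA := proj_vi hAv (hPA x).
have viB := proj_vi hBv (hPB r).
have hx0 : vnorm (vsub x z0) <= R0.
  have -> : vsub x z0 = vadd x (vscale (-1) z0) by vext; ring.
  apply: Rle_trans (vnorm_tri _ _) _; rewrite vnorm_scale Rabs_Ropp Rabs_R1 /R0; lra.
have hxa : vnorm (vsub x a) <= R0 by have := hPam z0 hzA; rewrite -/a; lra.
have haz : vnorm (vsub a z0) <= 2 * R0.
  apply: Rle_trans (vnorm_tri_sub a x z0) _; rewrite vnorm_subC; lra.
set u := vsub x a; set v := vsub r b.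
have hv : vnorm v <= 5 * R0.
  apply: Rle_trans (hPbm z0 hzB) _.
  have -> : vsub r z0 = vadd (vscale 2 (vsub a z0)) (vscale (-1) (vsub x z0)).
    by vext; rewrite /r /reflector /vsub /vscale /a; ring.
  apply: Rle_trans (vnorm_tri _ _) _; rewrite !vnorm_scale Rabs_Ropp Rabs_R1 Rabs_right; lra.
have Duv : vsub a b = vadd u v by vext; rewrite /u /v /r /reflector /vsub /vscale /a; ring.
have spu : (rowv u <= M)%MS.
  have -> : u = vsub (vsub x z0) (vsub a z0) by rewrite /u; vext; ring.
  apply: Spn_sub; [exact: spL | exact: spA].
have hu : vnorm u <= C1 * dl.
  have [p [q [hp [hq [Eu [np nq]]]]]] := hdec u spu.
  case: (Req_dec (vnorm u) 0) => hu0; first by rewrite hu0; nra.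
  set nu := vnorm u in np nq hu0 *.
  have hnu : 0 < nu by have := vnorm_ge0 u; rewrite -/nu in hu0 *; lra.
  set t := eps / (K * nu).
  have ht : 0 < t by apply: Rdiv_lt_0_compat; nra.
  have htK : t * (K * nu) = eps by rewrite /t; field; nra.
  have A1 : A (vadd z0 (vscale t p)).
    apply: ballA; first exact: Wc_scale.
    rewrite vnorm_scale Rabs_right; last lra.
    have := Rmult_le_compat_l t _ _ (Rlt_le _ _ ht) np; lra.
  have B1 : B (vadd z0 (vscale (- t) q)).
    apply: ballB; first exact: Wc_scale.
    rewrite vnorm_scale Rabs_Ropp Rabs_right; last lra.
    have := Rmult_le_compat_l t _ _ (Rlt_le _ _ ht) nq; lra.
  have I1 := viA _ A1.
  have E1 : vsub (vadd z0 (vscale t p)) a = vsub (vscale t p) (vsub a z0) by vext; ring.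
  rewrite E1 vinner_subr vinner_scaler -/u in I1.
  have I2 := viB _ B1.
  have E2 : vsub (vadd z0 (vscale (- t) q)) b = vsub (vscale (- t) q) (vsub b z0) by vext; ring.
  rewrite E2 vinner_subr vinner_scaler -/v in I2.
  have Euu : vinner u u = vinner u p + vinner u q by rewrite {2}Eu vinner_addr.
  have Euq : vinner u q = vinner (vsub a b) q - vinner v q.
    by rewrite Duv vinner_addl; ring.
  have C2 : vinner (vsub a b) q <= dl * (K * nu).
    apply: Rle_trans (CS _ _) _; rewrite -/dl; apply: Rmult_le_compat_l => //.
  have E3 : vinner u (vsub a z0) + vinner v (vsub b z0) = vinner (vsub a b) (vsub a z0) - vinner v (vsub a b).
    have -> : vsub b z0 = vsub (vsub a z0) (vsub a b) by vext; ring.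
    rewrite [vinner v _]vinner_subr Duv vinner_addl; ring.
  have C4 : vinner (vsub a b) (vsub a z0) <= dl * (2 * R0).
    apply: Rle_trans (CS _ _) _; rewrite -/dl; apply: Rmult_le_compat_l => //.
  have C5 : - vinner v (vsub a b) <= 5 * R0 * dl.
    have := CS_abs v (vsub a b); rewrite -/dl => h.
    have := Rle_abs (- vinner v (vsub a b)); rewrite Rabs_Ropp.
    have := Rmult_le_compat_r dl _ _ hdl hv. lra.
  have Hsq : vinner u u = nu * nu by rewrite -vnorm_sq.
  have key : t * (nu * nu) <= 7 * R0 * dl + eps * dl.
    have : t * (nu * nu) <= vinner u (vsub a z0) + vinner v (vsub b z0) + t * (dl * (K * nu)).
      rewrite -Hsq Euu Euq.
      have := Rmult_le_compat_l t _ _ (Rlt_le _ _ ht) C2. lra.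
    have -> : t * (dl * (K * nu)) = eps * dl by rewrite -htK; ring.
    rewrite E3; lra.
  have E4 : t * (nu * nu) = eps / K * nu by rewrite /t; field; nra.
  rewrite E4 in key.
  have : nu = K / eps * (eps / K * nu) by field; lra.
  move=> ->; rewrite /C1.
  have := Rmult_le_compat_l (K / eps) _ _ (Rlt_le _ _ (Rdiv_lt_0_compat _ _ hK heps)) key.
  lra.
case: (Req_dec dl 0) => hdl0.
  have Eab : a = b.
    apply: functional_extensionality => j; have := vnorm0 _ hdl0 j; rewrite /vsub; lra.
  exists a; split => //; split; first by rewrite Eab.
  rewrite hdl0 in hu *; rewrite -/u; lra.
have hdlp : 0 < dl by lra.
have spab : (rowv (vsub a b) <= M)%MS.
  have -> : vsub a b = vsub (vsub a z0) (vsub b z0) by vext; ring.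
  apply: Spn_sub; [exact: spA | exact: spB].
have [p [q [hp [hq [Eab [np nq]]]]]] := hdec _ spab.
rewrite -/dl in np nq.
set lam := K * dl / (K * dl + eps).
set mu := eps / (K * dl).
have hKd : 0 < K * dl by nra.
have hlam : 0 < lam by apply: Rdiv_lt_0_compat; lra.
have hlam1 : lam <= 1.
  rewrite /lam; apply: (Rmult_le_reg_r (K * dl + eps)); first lra.
  have -> : K * dl / (K * dl + eps) * (K * dl + eps) = K * dl by field; lra. lra.
have hlmu : lam * mu = 1 - lam by rewrite /lam /mu; field; lra.
have hlamK : lam <= K * dl / eps.
  rewrite /lam; apply: (Rmult_le_reg_r ((K * dl + eps) * eps)); first nra.
  have -> : K * dl / (K * dl + eps) * ((K * dl + eps) * eps) = K * dl * eps by field; lra.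
  have -> : K * dl / eps * ((K * dl + eps) * eps) = K * dl * (K * dl + eps) by field; lra.
  nra.
have hmu : 0 < mu by apply: Rdiv_lt_0_compat; lra.
have hmuK : mu * (K * dl) = eps by rewrite /mu; field; lra.
have zA : A (vadd z0 (vscale (- mu) p)).
  apply: ballA; first exact: Wc_scale.
  rewrite vnorm_scale Rabs_Ropp Rabs_right; last lra.
  have := Rmult_le_compat_l mu _ _ (Rlt_le _ _ hmu) np; lra.
have zB : B (vadd z0 (vscale mu q)).
  apply: ballB; first exact: Wc_scale.
  rewrite vnorm_scale Rabs_right; last lra.
  have := Rmult_le_compat_l mu _ _ (Rlt_le _ _ hmu) nq; lra.
set c := vadd (vscale lam (vadd z0 (vscale (- mu) p))) (vscale (1 - lam) a).
have cA : A c by apply: hAv => //; lra.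
have cB : B c.
  have -> : c = vadd (vscale lam (vadd z0 (vscale mu q))) (vscale (1 - lam) b).
    apply: functional_extensionality => j.
    have hj : a j = b j + p j + q j.
      have := congr1 (fun f => f j) Eab; rewrite /vsub /vadd; lra.
    rewrite /c /vadd /vscale hj -hlmu; ring.
  by apply: hBv => //; lra.
exists c; split => //; split => //.
have -> : vsub x c = vadd u (vadd (vscale lam (vsub a z0)) (vscale (lam * mu) p)).
  apply: functional_extensionality => j.
  rewrite /c /u /vadd /vsub /vscale; ring.
rewrite hlmu.
apply: Rle_trans (vnorm_tri _ _) _.
apply: Rle_trans (Rplus_le_compat_l _ _ _ (vnorm_tri _ _)) _.
rewrite !vnorm_scale !Rabs_right; try lra.
have e1 : lam * vnorm (vsub a z0) <= K * dl / eps * (2 * R0).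
  apply: Rmult_le_compat => //; [lra| exact: vnorm_ge0].
have e2 : (1 - lam) * vnorm p <= K * dl.
  have := vnorm_ge0 p; nra.
have -> : Ctot * dl = C1 * dl + K * dl / eps * (2 * R0) + K * dl + dl by rewrite /Ctot; field; lra.
lra.
Qed.
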